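(* Let $s_0,s_1,s_2$ be the $3$-hyperbolic functions and let $\ell_\nu^-=\{t\zeta_\nu: t\le 0\}$ for $\nu=0,1,2$. Then none of $s_0,s_1,s_2$ vanishes on $\Omega=\mathbb{C}\setminus\bigcup_{\nu=0}^{2}\ell_\nu^-$; that is, every zero of each $s_k$ lies on one of the three rays $\ell_0^-,\ell_1^-,\ell_2^-$ (which are the bisectors of the three sectors into which the rays $\{t\zeta_\nu: t>0\}$ divide the plane).
   Context: Let $\zeta_m=e^{2\pi i m/3}$, $m=0,1,2$. The $3$-hyperbolic functions are $s_k(z)=\frac13\sum_{m=0}^{2}\zeta_m^{-k}e^{z\zeta_m}$, $k=0,1,2$, $z\in\mathbb{C}$. *)

(* Defs.v *)
From Stdlib Require Import Reals.
From Coquelicot Require Import Coquelicot.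
Open Scope R_scope.

Definition cexp (z : C) : C :=
  (exp (Re z) * cos (Im z), exp (Re z) * sin (Im z)).

Definition zeta (m : nat) : C := cexp (RtoC 0 + Ci * RtoC (2 * PI * INR m / 3))%C.

Definition s (k : nat) (z : C) : C :=
  (/ RtoC 3 * (Cinv (Cpow (zeta 0) k) * cexp (z * zeta 0)
              + Cinv (Cpow (zeta 1) k) * cexp (z * zeta 1)
              + Cinv (Cpow (zeta 2) k) * cexp (z * zeta 2)))%C.

Definition on_neg_ray (nu : nat) (z : C) : Prop :=
  exists t : R, t <= 0 /\ z = (RtoC t * zeta nu)%C.

(* Main.v *)
Require Import Defs.
From Stdlib Require Import Reals Lra Lia Ratan.
From Coquelicot Require Import Coquelicot.
Open Scope R_scope.

Lemma sin_sq_le x : sin x ^ 2 <= x ^ 2.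
Proof.
  assert (H: forall u, 0 < u -> sin u ^2 <= u^2).
  { intros u Hu. pose proof (sin_lt_x u Hu).
    destruct (Rle_lt_dec 1 u).
    - pose proof (SIN_bound u). nra.
    - assert (0 <= sin u).
      { apply sin_ge_0; pose proof PI2_1; lra. }
      nra. }
  destruct (Rtotal_order x 0) as [h|[h|h]].
  - replace (sin x ^ 2) with (sin (-x) ^ 2) by (rewrite sin_neg; ring).
    replace (x^2) with ((-x)^2) by ring. apply H; lra.
  - subst. rewrite sin_0. lra.
  - apply H; lra.
Qed.

Lemma sin_shift_bound w q (n : Z) :
  w = sqrt 3 * q / 2 + IZR n * PI \/ w = - (sqrt 3 * q / 2) + IZR n * PI ->
  sin w ^ 2 <= 3 * q ^ 2 / 4.
Proof.
  intros Hw.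
  assert (Hs : sin (IZR n * PI) = 0) by (apply sin_eq_0_1; eauto).
  assert (Hc : cos (IZR n * PI) ^ 2 = 1).
  { pose proof (sin2_cos2 (IZR n * PI)). unfold Rsqr in *. rewrite Hs in *. nra. }
  assert (H3 : sqrt 3 * sqrt 3 = 3) by (apply sqrt_sqrt; lra).
  assert (E: forall u, sin (u + IZR n * PI) ^ 2 = sin u ^ 2).
  { intros u. rewrite sin_plus, Hs. replace ((sin u * cos (IZR n * PI) + cos u * 0) ^ 2)
      with (sin u ^ 2 * cos (IZR n * PI) ^ 2) by ring. rewrite Hc. ring. }
  assert (Hb : (sqrt 3 * q / 2) ^ 2 = 3 * q ^ 2 / 4).
  { replace ((sqrt 3 * q / 2) ^ 2) with ((sqrt 3 * sqrt 3) * q^2/4) by field. rewrite H3. ring. }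
  destruct Hw as [Hw|Hw]; subst w; rewrite E.
  - rewrite <- Hb. apply sin_sq_le.
  - rewrite <- Hb. replace ((sqrt 3 * q / 2) ^ 2) with ((- (sqrt 3 * q / 2)) ^ 2) by ring.
    apply sin_sq_le.
Qed.

Lemma keyK q S : 0 < q -> S ^ 2 <= 3 * q ^ 2 / 4 ->
  4 * S ^ 2 < (exp q - 1) ^ 2 * (exp q + 2).
Proof.
  intros Hq HS. pose proof (exp_ineq1 q ltac:(lra)).
  assert (h1: q^2 < (exp q - 1)^2) by nra.
  assert (h2: 3 < exp q + 2) by lra.
  assert (0 < q^2) by nra. nra.
Qed.

Lemma core (aj am an bj bm bn g th : R) :
  exp aj * cos bj + exp am * cos bm + exp an * cos bn = 0 ->
  exp aj * sin bj + exp am * sin bm + exp an * sin bn = 0 ->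
  an < aj -> bj = g - th -> bn = g + th ->
  sin (bm - g) ^ 2 <= 3 * (aj - an) ^ 2 / 4 -> an < am.
Proof.
  intros H1 H2 Hq Hj Hn HS.
  set (r := bm - g) in *. assert (Hm : bm = g + r) by (unfold r; ring).
  rewrite Hj, Hn, Hm in H1, H2.
  rewrite cos_minus, cos_plus, cos_plus in H1.
  rewrite sin_minus, sin_plus, sin_plus in H2.
  pose proof (sin2_cos2 g) as Pg. pose proof (sin2_cos2 th) as Pt. pose proof (sin2_cos2 r) as Pr.
  unfold Rsqr in Pg, Pt, Pr.
  set (Ej := exp aj) in *. set (Em := exp am) in *. set (En := exp an) in *.
  assert (E1 : (Ej + En) * cos th + Em * cos r = 0).
  { transitivity (cos g * (Ej * (cos g * cos th + sin g * sin th) + Em * (cos g * cos r - sin g * sin r) +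
      En * (cos g * cos th - sin g * sin th)) + sin g * (Ej * (sin g * cos th - cos g * sin th) +
      Em * (sin g * cos r + cos g * sin r) + En * (sin g * cos th + cos g * sin th))
      + ((Ej + En) * cos th + Em * cos r) * (1 - (sin g * sin g + cos g * cos g))).
    - ring.
    - rewrite H1, H2, Pg. ring. }
  assert (E2 : (En - Ej) * sin th + Em * sin r = 0).
  { transitivity (- sin g * (Ej * (cos g * cos th + sin g * sin th) + Em * (cos g * cos r - sin g * sin r) +
      En * (cos g * cos th - sin g * sin th)) + cos g * (Ej * (sin g * cos th - cos g * sin th) +
      Em * (sin g * cos r + cos g * sin r) + En * (sin g * cos th + cos g * sin th))
      + ((En - Ej) * sin th + Em * sin r) * (1 - (sin g * sin g + cos g * cos g))).
    - ring.
    - rewrite H1, H2, Pg. ring. }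
  destruct (Rlt_le_dec an am) as [ok|bad]; [exact ok|exfalso].
  assert (HEm : 0 < Em) by apply exp_pos.
  assert (HEn : 0 < En) by apply exp_pos.
  assert (HEmn : Em <= En) by (destruct bad as [b|b]; [left; apply exp_increasing; exact b | subst Em En; rewrite b; lra]).
  set (E := exp (aj - an)).
  assert (HEj : Ej = En * E) by (unfold Ej, En, E; rewrite <- exp_plus; f_equal; ring).
  pose proof (keyK (aj - an) (sin r) ltac:(lra) HS) as K. fold E in K.
  assert (HE : 1 < E) by (unfold E; pose proof (exp_ineq1 (aj - an) ltac:(lra)); lra).
  set (S := sin r) in *. set (C := cos r) in *.
  assert (Key : (Ej*Ej - En*En)^2 = Em^2 * ((Ej - En)^2 + 4*Ej*En*S^2)).
  { assert (A1 : ((Ej + En) * cos th)^2 = (Em * C)^2) by (replace ((Ej + En) * cos th) with (- (Em * C)) by lra; ring).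
    assert (A2 : ((Ej - En) * sin th)^2 = (Em * S)^2) by (replace ((Ej - En) * sin th) with (Em * S) by lra; ring).
    transitivity ((Ej - En)^2 * ((Ej + En) * cos th)^2 + (Ej + En)^2 * ((Ej - En) * sin th)^2
       + (Ej - En)^2*(Ej+En)^2 * (1 - (sin th * sin th + cos th * cos th))).
    - ring.
    - rewrite A1, A2, Pt.
      transitivity (Em^2 * ((Ej - En)^2 * (C*C) + (Ej+En)^2 * (S*S))); [ring|].
      replace (C*C) with (1 - S*S) by lra. ring. }
  assert (W0 : 0 <= (Ej - En)^2 + 4*Ej*En*S^2).
  { assert (0 <= Ej) by (unfold Ej; left; apply exp_pos).
    assert (0 <= Ej*En) by nra. assert (0 <= S^2) by nra. assert (0 <= (Ej*En)*S^2) by (apply Rmult_le_pos; assumption).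
    replace (4*Ej*En*S^2) with (4*((Ej*En)*S^2)) by ring. pose proof (pow2_ge_0 (Ej - En)). lra. }
  assert (Lt : En^2 * ((Ej - En)^2 + 4*Ej*En*S^2) < (Ej*Ej - En*En)^2).
  { rewrite HEj.
    replace (En ^ 2 * ((En * E - En) ^ 2 + 4 * (En * E) * En * S ^ 2)) with
      (En^4 * ((E - 1)^2 + 4 * E * S^2)) by ring.
    replace ((En * E * (En * E) - En * En) ^ 2) with (En^4 * ((E - 1)^2 + E * ((E - 1) ^ 2 * (E + 2)))) by ring.
    assert (0 < En^4) by (apply pow_lt; lra).
    apply Rmult_lt_compat_l; [lra|]. nra. }
  assert (Le : Em^2 * ((Ej - En)^2 + 4*Ej*En*S^2) <= En^2 * ((Ej - En)^2 + 4*Ej*En*S^2)).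
  { apply Rmult_le_compat_r; [lra|]. nra. }
  lra.
Qed.

Definition thz (m : nat) := 2 * PI * INR m / 3.

Lemma zeta_cis m : zeta m = (cos (thz m), sin (thz m)).
Proof.
  unfold zeta, cexp, thz, Re, Im, Cplus, Cmult, Ci, RtoC; simpl.
  replace (0 + (0 * (2 * PI * INR m / 3) - 1 * 0)) with 0 by ring.
  replace (0 + (0 * 0 + 1 * (2 * PI * INR m / 3))) with (2 * PI * INR m / 3) by ring.
  rewrite exp_0. f_equal; ring.
Qed.

Lemma cpow_cis a n : Cpow (cos a, sin a) n = (cos (INR n * a), sin (INR n * a)).
Proof.
  induction n.
  - simpl. rewrite Rmult_0_l, cos_0, sin_0. reflexivity.
  - simpl Cpow. rewrite IHn, S_INR.
    replace ((INR n + 1) * a) with (a + INR n * a) by ring.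
    rewrite cos_plus, sin_plus. unfold Cmult; simpl. f_equal; ring.
Qed.

Lemma cinv_cis a : Cinv (cos a, sin a) = (cos (- a), sin (- a)).
Proof.
  unfold Cinv; simpl. pose proof (sin2_cos2 a) as P. unfold Rsqr in P.
  replace (cos a * (cos a * 1) + sin a * (sin a * 1)) with 1 by lra.
  rewrite cos_neg, sin_neg. apply injective_projections; simpl; field.
Qed.

Lemma cexp_mul x y c d : cexp ((x, y) * (c, d))%C =
  (exp (x * c - y * d) * cos (x * d + y * c), exp (x * c - y * d) * sin (x * d + y * c)).
Proof. reflexivity. Qed.

Lemma cis_mul p e b : Cmult (cos p, sin p) (e * cos b, e * sin b) = (e * cos (b + p), e * sin (b + p)).
Proof. unfold Cmult; simpl. rewrite cos_plus, sin_plus. f_equal; ring. Qed.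

Lemma inv3 : Cinv (RtoC 3) = RtoC (/3).
Proof. unfold Cinv, RtoC; apply injective_projections; simpl; field. Qed.

Lemma s_real k x y : s k (x, y) = RtoC 0 ->
  exp (x * cos (thz 0) - y * sin (thz 0)) * cos (x * sin (thz 0) + y * cos (thz 0) + - (INR k * thz 0))
  + exp (x * cos (thz 1) - y * sin (thz 1)) * cos (x * sin (thz 1) + y * cos (thz 1) + - (INR k * thz 1))
  + exp (x * cos (thz 2) - y * sin (thz 2)) * cos (x * sin (thz 2) + y * cos (thz 2) + - (INR k * thz 2)) = 0 /\
  exp (x * cos (thz 0) - y * sin (thz 0)) * sin (x * sin (thz 0) + y * cos (thz 0) + - (INR k * thz 0))
  + exp (x * cos (thz 1) - y * sin (thz 1)) * sin (x * sin (thz 1) + y * cos (thz 1) + - (INR k * thz 1))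
  + exp (x * cos (thz 2) - y * sin (thz 2)) * sin (x * sin (thz 2) + y * cos (thz 2) + - (INR k * thz 2)) = 0.
Proof.
  unfold s. rewrite !zeta_cis, !cpow_cis, !cinv_cis, !cexp_mul, !cis_mul, inv3.
  intros H. unfold Cmult, Cplus, RtoC in H; simpl in H.
  injection H as H1 H2. split; nra.
Qed.

Lemma sector (aj am an bj bm bn : R) :
  exp aj * cos bj + exp am * cos bm + exp an * cos bn = 0 ->
  exp aj * sin bj + exp am * sin bm + exp an * sin bn = 0 ->
  am < aj -> an < aj ->
  sin (bm - (bj + bn) / 2) ^ 2 <= 3 * (aj - an) ^ 2 / 4 ->
  sin (bn - (bj + bm) / 2) ^ 2 <= 3 * (aj - am) ^ 2 / 4 -> False.
Proof.
  intros H1 H2 Hm Hn S1 S2.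
  assert (an < am) by (apply (core aj am an bj bm bn ((bj + bn)/2) ((bn - bj)/2)); auto; lra).
  assert (am < an) by (apply (core aj an am bj bn bm ((bj + bm)/2) ((bm - bj)/2)); auto; lra).
  lra.
Qed.

Lemma thz0 : thz 0 = 0.
Proof. unfold thz; simpl; field. Qed.
Lemma thz1 : thz 1 = 2 * (PI / 3).
Proof. unfold thz; simpl; field. Qed.
Lemma thz2 : thz 2 = PI / 3 + PI.
Proof. unfold thz; simpl; field. Qed.
Lemma c0 : cos (thz 0) = 1. Proof. rewrite thz0; apply cos_0. Qed.
Lemma s0 : sin (thz 0) = 0. Proof. rewrite thz0; apply sin_0. Qed.
Lemma c1 : cos (thz 1) = -1/2. Proof. rewrite thz1; apply cos_2PI3. Qed.
Lemma s1 : sin (thz 1) = sqrt 3 / 2. Proof. rewrite thz1; apply sin_2PI3. Qed.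
Lemma c2 : cos (thz 2) = -1/2. Proof. rewrite thz2, neg_cos, cos_PI3; field. Qed.
Lemma s2 : sin (thz 2) = - (sqrt 3 / 2). Proof. rewrite thz2, neg_sin, sin_PI3; field. Qed.

Ltac sb k := first
    [ apply (sin_shift_bound _ _ 0); left; subst; lra
    | apply (sin_shift_bound _ _ 0); right; subst; lra
    | apply (sin_shift_bound _ _ (Z.of_nat k)); left; subst; lra
    | apply (sin_shift_bound _ _ (Z.of_nat k)); right; subst; lra
    | apply (sin_shift_bound _ _ (- Z.of_nat k)); left; subst; lra
    | apply (sin_shift_bound _ _ (- Z.of_nat k)); right; subst; lra ].

Theorem proposition5p1 :
  forall (k : nat) (z : C), (k <= 2)%nat ->
    s k z = RtoC 0 ->
    exists nu : nat, (nu <= 2)%nat /\ on_neg_ray nu z.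
Proof.
  intros k [x y] Hk Hs. apply s_real in Hs. destruct Hs as [H1 H2].
  set (a0 := x * cos (thz 0) - y * sin (thz 0)) in *.
  set (a1 := x * cos (thz 1) - y * sin (thz 1)) in *.
  set (a2 := x * cos (thz 2) - y * sin (thz 2)) in *.
  set (b0 := x * sin (thz 0) + y * cos (thz 0) + - (INR k * thz 0)) in *.
  set (b1 := x * sin (thz 1) + y * cos (thz 1) + - (INR k * thz 1)) in *.
  set (b2 := x * sin (thz 2) + y * cos (thz 2) + - (INR k * thz 2)) in *.
  assert (Ht : sqrt 3 * sqrt 3 = 3) by (apply sqrt_sqrt; lra).
  assert (Htp : 0 < sqrt 3) by (apply sqrt_lt_R0; lra).
  assert (Htx : sqrt 3 * sqrt 3 * x = 3 * x) by (rewrite Ht; ring).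
  assert (Hty : sqrt 3 * sqrt 3 * y = 3 * y) by (rewrite Ht; ring).
  set (K := INR k * PI).
  assert (HK1 : IZR (Z.of_nat k) * PI = K) by (unfold K; rewrite <- INR_IZR_INZ; ring).
  assert (HK2 : IZR (- Z.of_nat k) * PI = - K) by (rewrite opp_IZR; lra).
  assert (HK0 : IZR 0 * PI = 0) by (simpl; ring).
  assert (Ea0 : a0 = x) by (unfold a0; rewrite c0, s0; ring).
  assert (Ea1 : a1 = - x / 2 - sqrt 3 * y / 2) by (unfold a1; rewrite c1, s1; field).
  assert (Ea2 : a2 = - x / 2 + sqrt 3 * y / 2) by (unfold a2; rewrite c2, s2; field).
  assert (Eb0 : b0 = y) by (unfold b0; rewrite c0, s0, thz0; ring).
  assert (Eb1 : b1 = sqrt 3 * x / 2 - y / 2 - 2 * K / 3)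
    by (unfold b1; rewrite c1, s1, thz1; unfold K; field).
  assert (Eb2 : b2 = - sqrt 3 * x / 2 - y / 2 - 4 * K / 3)
    by (unfold b2; rewrite c2, s2, thz2; unfold K; field).
  clearbody a0 a1 a2 b0 b1 b2.
  destruct (Rtotal_order a0 a1) as [o1|[o1|o1]];
  destruct (Rtotal_order a0 a2) as [o2|[o2|o2]];
  destruct (Rtotal_order a1 a2) as [o3|[o3|o3]];
  first
    [ exfalso; lra
    | exfalso; apply (sector a0 a1 a2 b0 b1 b2); [lra|lra|lra|lra|sb k|sb k]
    | exfalso; apply (sector a1 a2 a0 b1 b2 b0); [lra|lra|lra|lra|sb k|sb k]
    | exfalso; apply (sector a2 a0 a1 b2 b0 b1); [lra|lra|lra|lra|sb k|sb k]
    | idtac ].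
  all: first
    [ assert (T1 : a0 = a1) by lra; assert (T2 : a2 <= a0) by lra;
      assert (Hy1 : sqrt 3 * y = -3 * x) by lra;
      assert (Hy : y = - sqrt 3 * x) by (apply Rmult_eq_reg_l with (sqrt 3); lra);
      exists 1%nat; split; [lia|]; exists (-2 * x); split; [lra|];
      rewrite zeta_cis, c1, s1; unfold Cmult, RtoC; apply injective_projections; simpl; lra
    | assert (T1 : a0 = a2) by lra; assert (T2 : a1 <= a0) by lra;
      assert (Hy1 : sqrt 3 * y = 3 * x) by lra;
      assert (Hy : y = sqrt 3 * x) by (apply Rmult_eq_reg_l with (sqrt 3); lra);
      exists 2%nat; split; [lia|]; exists (-2 * x); split; [lra|];
      rewrite zeta_cis, c2, s2; unfold Cmult, RtoC; apply injective_projections; simpl; lra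
    | assert (T1 : a1 = a2) by lra; assert (T2 : a0 <= a1) by lra;
      assert (Hy1 : sqrt 3 * y = 0) by lra;
      assert (Hy : y = 0) by (apply Rmult_eq_reg_l with (sqrt 3); lra);
      exists 0%nat; split; [lia|]; exists x; split; [lra|];
      rewrite zeta_cis, c0, s0; unfold Cmult, RtoC; apply injective_projections; simpl; lra ].
Qed.
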